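(* Let $G$ be a reduced simple undirected graph with terminals $s,t$ and maximum degree $\delta$, and let $S$ be a feedback vertex set of $G$ whose size is at most twice the minimum size of a feedback vertex set of $G$. Then $T=S\cup N(S)$ is a tracking set for $G$, and $|T|\le 2(\delta+1)\cdot OPT$, where $OPT$ is the minimum size of a tracking set for $G$.
   Context: An $s$-$t$ path is a simple path from $s$ to $t$. A set $T\subseteq V(G)$ is a tracking set if for any two distinct $s$-$t$ paths $P_1,P_2$, the sequence of vertices of $T\cap V(P_1)$ in the order encountered along $P_1$ differs from the sequence of vertices of $T\cap V(P_2)$ in the order encountered along $P_2$. A graph is reduced if every vertex and every edge lies on at least one $s$-$t$ path. A feedback vertex set is a set of vertices whose removal leaves a forest. $N(S)=\bigcup_{v\in S}N(v)$. *)

(* Defs.v *)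
From mathcomp Require Import all_boot.
Set Implicit Arguments. Unset Strict Implicit. Unset Printing Implicit Defensive.

Section Graphs.
Variables (V : finType) (e : rel V).

Definition simple_graph : Prop := symmetric e /\ irreflexive e.

Definition nbhd (v : V) : {set V} := [set w | e v w].
Definition nbhdS (S : {set V}) : {set V} := \bigcup_(v in S) nbhd v.

Definition max_degree : nat := \max_(v : V) #|nbhd v|.

Definition st_path (s t : V) (p : seq V) : bool :=
  if p is x :: q then [&& x == s, path e x q, last x q == t & uniq p]
  else false.

Definition tracking_set (s t : V) (T : {set V}) : Prop :=
  forall P1 P2 : seq V, st_path s t P1 -> st_path s t P2 -> P1 <> P2 ->
    [seq v <- P1 | v \in T] <> [seq v <- P2 | v \in T].

Definition reduced (s t : V) : Prop :=
  (forall v : V, exists P, st_path s t P /\ v \in P) /\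
  (forall u v : V, e u v ->
     exists P, st_path s t P /\ (infix [:: u; v] P || infix [:: v; u] P)).

Definition is_graph_cycle (c : seq V) : bool :=
  [&& 3 <= size c, uniq c & cycle e c].

Definition fvs (S : {set V}) : Prop :=
  forall c : seq V, is_graph_cycle c -> has (fun v => v \in S) c.

End Graphs.

(* Main.v *)
Require Import Defs.
From mathcomp Require Import all_boot.
Set Implicit Arguments. Unset Strict Implicit. Unset Printing Implicit Defensive.


Lemma filter_nil (T : eqType) (a : pred T) (s : seq T) :
  ~~ has a s -> [seq x <- s | a x] = [::].
Proof. by rewrite has_filter negbK => /eqP. Qed.

Lemma sym_rev_path (T : Type) (e : rel T) x p :
  symmetric e -> path e x p -> path e (last x p) (rev (belast x p)).
Proof.
move=> es hp; rewrite rev_path; apply: etrans hp; apply: eq_path => a b /=.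
by rewrite es.
Qed.

Lemma last_rev_belast (T : Type) (x : T) p :
  last (last x p) (rev (belast x p)) = x.
Proof.
have := congr1 rev (lastI x p); rewrite rev_rcons rev_cons => E.
by rewrite -[last _ (rev _)]/(last x (last x p :: rev (belast x p))) -E last_rcons.
Qed.

Lemma split_first (T : eqType) (a : pred T) (p : seq T) :
  has a p -> exists pre u post, [/\ p = pre ++ u :: post, a u & ~~ has a pre].
Proof.
elim: p => [|x p IH] //= /orP [ax | hp].
  by exists [::], x, p.
case: (boolP (a x)) => ax; first by exists [::], x, p.
have [pre [u [post [-> au hpre]]]] := IH hp.
by exists (x :: pre), u, post; rewrite /= (negbTE ax).
Qed.

Definition TT (V : finType) (e : rel V) (S : {set V}) := S :|: nbhdS e S.

Lemma three_T (V : finType) (e : rel V) (S : {set V}) c :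
  simple_graph e -> fvs e S -> is_graph_cycle e c ->
  exists v u1 u2, [/\ v \in c, u1 \in c & u2 \in c] /\ [/\ v != u1, v != u2 & u1 != u2]
    /\ [/\ v \in TT e S, u1 \in TT e S & u2 \in TT e S].
Proof.
move=> [esym eirr] hS hc; have/hasP [v vc vS] := hS c hc.
case/and3P: hc => sz uc cy.
case: (rot_to vc) => i r Er.
have := rot_uniq i c; rewrite Er uc => ur.
have := rot_cycle i e c; rewrite Er cy => cr.
move: sz; rewrite -(size_rot i) Er => sz.
have mr : forall y, y \in v :: r -> y \in c by move=> y; rewrite -Er mem_rot.
case: r Er ur cr sz mr => [|u1 [|y r']] //= Er ur cr sz mr.
move: cr => /= /and3P [evu1 _]; rewrite rcons_path => /andP [_ eu2v].
have u2in : last y r' \in y :: r' by apply: mem_last.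
move: ur => /and4P [vn u1n _ _].
exists v, u1, (last y r'); split; [split|split; split].
- by rewrite mr ?inE ?eqxx.
- by rewrite mr ?inE ?eqxx ?orbT.
- by apply: mr; rewrite !inE; move: u2in; rewrite inE => ->; rewrite !orbT.
- by apply: contraNneq vn => ->; rewrite inE eqxx.
- by apply: contraNneq vn => ->; rewrite inE u2in orbT.
- by apply: contraNneq u1n => ->.
- by rewrite /TT inE vS.
- by rewrite /TT inE; apply/orP; right; apply/bigcupP; exists v; rewrite // inE.
- by rewrite /TT inE; apply/orP; right; apply/bigcupP; exists v; rewrite // inE esym.
Qed.


Lemma twopaths_cycle (V : finType) (e : rel V) (S : {set V}) x z h1 q1 h2 q2 :
  simple_graph e -> fvs e S -> h1 != h2 ->
  path e x (h1 :: q1) -> path e x (h2 :: q2) ->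
  last h1 q1 = z -> last h2 q2 = z -> x \notin h1 :: q1 -> x \notin h2 :: q2 ->
  (forall v, v \in h1 :: q1 -> v \in TT e S -> v = z) ->
  (forall v, v \in h2 :: q2 -> v \in TT e S -> v = z) -> False.
Proof.
move=> sg hS ne p1 p2 l1 l2 x1 x2 T1 T2.
have [esym eirr] := sg.
move: p1 p2 => /= /andP[ex1 p1] /andP[ex2 p2].
set R := rev (belast h2 q2).
have pR : path e z R by rewrite /R -l2; apply: sym_rev_path.
have lR : last z R = h2 by rewrite /R -l2 last_rev_belast.
have pw : path e h1 (q1 ++ R) by rewrite cat_path p1 l1 pR.
have lw : last h1 (q1 ++ R) = h2 by rewrite last_cat l1 lR.
have memw : forall y, y \in q1 ++ R -> (y \in h1 :: q1) || (y \in h2 :: q2).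
  move=> y; rewrite mem_cat => /orP [yq|]; first by rewrite inE yq orbT.
  by rewrite /R mem_rev => /mem_belast ->; rewrite orbT.
move: lw; case: (shortenP pw) => sp psp usp ssp lsp.
have xsp : x \notin h1 :: sp.
  rewrite inE negb_or; apply/andP; split.
    by apply: contraNneq x1 => ->; rewrite inE eqxx.
  apply/negP => /ssp /memw /orP [] ?; [by move/negP: x1|by move/negP: x2].
have hc : is_graph_cycle e (x :: h1 :: sp).
  apply/and3P; split.
  - by case: sp psp usp ssp lsp xsp => [|? ?] //= _ _ _ E _; move: ne; rewrite E eqxx.
  - by rewrite /= xsp; move: usp => /= ->.
  - by rewrite /cycle /= ex1 rcons_path psp lsp esym ex2.
have cT : forall w, w \in x :: h1 :: sp -> w \in TT e S -> (w == x) || (w == z).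
  move=> w; rewrite inE => /orP [->//|wi wT]; apply/orP; right; apply/eqP.
  move: wi; rewrite inE => /orP [/eqP Ew|/ssp /memw /orP [] wi].
  - by apply: T1; rewrite // Ew inE eqxx.
  - by apply: T1.
  - by apply: T2.
have [v [u1 [u2 [[vc u1c u2c] [[n1 n2 n3] [vT u1T u2T]]]]]] := three_T sg hS hc.
move: (cT _ vc vT) (cT _ u1c u1T) (cT _ u2c u2T) n1 n2 n3.
by do 3 (case/orP=> /eqP ->); rewrite ?eqxx.
Qed.

Lemma prefix_to (V : finType) (T : {set V}) (e : rel V) z f a' :
  forall h x, path e x (h :: a') -> [seq v <- h :: a' | v \in T] = z :: f ->
  exists q, [/\ path e x (h :: q), last h q = z, {subset h :: q <= h :: a'}
     & [seq v <- h :: q | v \in T] = [:: z]].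
Proof.
elim: a' f => [|h' a'' IH] f h x /=.
  case: (boolP (h \in T)) => hT //= /andP [exh _] [<- _].
  by exists [::]; split; rewrite //= ?andbT ?hT.
case: (boolP (h \in T)) => hT.
  move=> /andP [exh _] [<- _].
  by exists [::]; split; rewrite //= ?andbT ?hT //= => y; rewrite inE => /eqP ->; rewrite inE eqxx.
move=> /andP [exh ph] Ef.
have [q [pq lq sq Fq]] := IH f h' h ph Ef.
exists (h' :: q); split => //=.
- by rewrite exh.
- move=> y; rewrite inE => /orP [/eqP ->|/sq]; first by rewrite inE eqxx.
  by move=> yi; rewrite in_cons yi orbT.
Qed.


Lemma st_path_swap (V : finType) (e : rel V) s t pre u m m' w suf :
  st_path e s t (pre ++ u :: m ++ w :: suf) -> path e u (rcons m' w) ->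
  uniq (pre ++ u :: m' ++ w :: suf) -> st_path e s t (pre ++ u :: m' ++ w :: suf).
Proof.
move=> + pm' U; rewrite rcons_path in pm'; case/andP: pm' => pm' em'.
case: pre U => [|x pre] /= U /and4P [hs hp hl _]; rewrite hs U andbT.
  move: hp hl; rewrite !cat_path !last_cat /= => /and3P [_ _ ->] ->.
  by rewrite pm' em'.
move: hp hl; rewrite !cat_path !last_cat /= !cat_path /= !last_cat /=.
by move=> /and5P [-> -> _ _ ->] ->; rewrite pm' em'.
Qed.

Lemma uniq_swap (T : eqType) (pre X Y suf : seq T) :
  uniq (pre ++ X ++ suf) -> uniq Y -> (forall y, y \in Y -> y \notin pre ++ suf) ->
  uniq (pre ++ Y ++ suf).
Proof.
rewrite uniq_catCA [uniq (pre ++ Y ++ _)]uniq_catCA !cat_uniq => /and3P [_ _ U] UY H.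
rewrite UY U andbT; apply/hasPn => y yi.
by apply/negP => /H; rewrite yi.
Qed.


Lemma trackA (V : finType) (e : rel V) (S : {set V}) n :
  simple_graph e -> fvs e S ->
  forall x a b, size a <= n -> path e x a -> path e x b ->
  uniq (x :: a) -> uniq (x :: b) -> last x a = last x b -> a != b ->
  [seq v <- a | v \in TT e S] = [seq v <- b | v \in TT e S] -> False.
Proof.
move=> sg hS; elim: n => [|n IH] x [|h1 a'] [|h2 b'] //=.
- move=> _ _ _ _ /andP [xn _] E; move: xn; rewrite E.
  by rewrite mem_last.
- move=> _ _ _ _ /andP [xn _] E; move: xn; rewrite E.
  by rewrite mem_last.
- move=> _ _ _ /andP [xn _] _ E; move: xn; rewrite -E.
  by rewrite mem_last.
move=> sa /andP [ex1 p1] /andP [ex2 p2] /andP [xa ua] /andP [xb ub] El ne EF.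
case: (eqVneq h1 h2) => [eh|nh].
  subst h2; apply: (IH h1 a' b') => //.
  - by apply: contraNneq ne => ->.
  - by move: EF => /=; case: (h1 \in TT e S) => // -[].
have {}EF : [seq v <- h1 :: a' | v \in TT e S] = [seq v <- h2 :: b' | v \in TT e S] := EF.
case Fa: [seq v <- h1 :: a' | v \in TT e S] => [|z f].
  apply: (@twopaths_cycle V e S x (last h1 a') h1 a' h2 b') => //=.
  - by rewrite ex1.
  - by rewrite ex2.
  - move=> v vi vT; have : v \in [seq v <- h1 :: a' | v \in TT e S].
      by rewrite mem_filter vT.
    by rewrite Fa.
  - move=> v vi vT; have : v \in [seq v <- h2 :: b' | v \in TT e S].
      by rewrite mem_filter vT.
    by rewrite -EF Fa.
have pa : path e x (h1 :: a') by rewrite /= ex1.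
have pb : path e x (h2 :: b') by rewrite /= ex2.
have [q1 [pq1 lq1 sq1 Fq1]] := prefix_to pa Fa.
have [q2 [pq2 lq2 sq2 Fq2]] := prefix_to pb (etrans (esym EF) Fa).
apply: (@twopaths_cycle V e S x z h1 q1 h2 q2) => //.
- by apply: contra xa => /sq1.
- by apply: contra xb => /sq2.
- move=> v vi vT; have : v \in [seq v <- h1 :: q1 | v \in TT e S].
    by rewrite mem_filter vT.
  by rewrite Fq1 inE => /eqP.
- move=> v vi vT; have : v \in [seq v <- h2 :: q2 | v \in TT e S].
    by rewrite mem_filter vT.
  by rewrite Fq2 inE => /eqP.
Qed.

Lemma part1 (V : finType) (e : rel V) (s t : V) (S : {set V}) :
  simple_graph e -> fvs e S -> tracking_set e s t (S :|: nbhdS e S).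
Proof.
move=> sg hS [|x a] [|y b] //= /and4P [/eqP xs pa la ua] /and4P [/eqP ys pb lb ub] ne EF.
subst x y.
apply: (@trackA V e S (size a) sg hS s a b) => //.
- by rewrite (eqP la) (eqP lb).
- by apply/eqP => E; apply: ne; rewrite E.
- by move: EF; rewrite -/(TT e S); case: (s \in TT e S) => // -[].
Qed.


Lemma tracking_fvs (V : finType) (e : rel V) (s t : V) (T' : {set V}) :
  simple_graph e -> reduced e s t -> tracking_set e s t T' -> fvs e T'.
Proof.
move=> [esym eirr] [_ red] tr c hc.
apply/negPn/negP => nh.
have nc := hasPn nh.
have hc' := hc; case/and3P: hc' => sz uc cy.
have [c0 [c1 [c0c c1c n01 e01]]] :
    exists c0 c1, [/\ c0 \in c, c1 \in c, c0 != c1 & e c0 c1].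
  case: c sz uc cy {hc nh nc} => [|c0 [|c1 c']] //= _ /and3P [n0 _ _] /andP [e01 _].
  exists c0, c1; split; rewrite ?inE ?eqxx ?orbT //.
  by apply: contraNneq n0 => ->; rewrite inE eqxx.
have [P [stP inf]] := red c0 c1 e01.
have [Pc0 Pc1] : c0 \in P /\ c1 \in P.
  by case/orP: inf => /infixW /mem_subseq H; split; apply: H; rewrite !inE eqxx ?orbT.
have hP : has (fun v => v \in c) P by apply/hasP; exists c0.
have [pre [u [rest [EP uc' hpre]]]] := split_first hP.
have hr : has (fun v => v \in c) rest.
  apply/negPn/negP => hr.
  have key : forall y, y \in P -> y \in c -> y = u.
    move=> y; rewrite EP mem_cat inE => /orP [yp|/orP[/eqP //|yr]] yc.
    - by move/hasPn: hpre => /(_ y yp); rewrite yc.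
    - by move/hasPn: hr => /(_ y yr); rewrite yc.
  by move: n01; rewrite (key c0 Pc0 c0c) (key c1 Pc1 c1c) eqxx.
have hr' : has (fun v => v \in c) (rev rest) by rewrite has_rev.
have [suf' [w [mid' [Er wc hsuf']]]] := split_first hr'.
have Erest : rest = rev mid' ++ w :: rev suf'.
  by rewrite -[rest]revK Er rev_cat rev_cons cat_rcons.
set mid := rev mid' in Erest; set suf := rev suf' in Erest.
have hsuf : ~~ has (fun v => v \in c) suf by rewrite has_rev.
rewrite Erest in EP.
have uP : uniq P by move: stP; case: (P) => // x q /and4P [].
have stP' := stP; rewrite EP in stP'.
have nuw : u != w.
  move: uP; rewrite EP cat_uniq => /and3P [_ _ /= /andP [un _]].
  by apply: contraNneq un => ->; rewrite mem_cat inE eqxx orbT.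
case: (rot_to uc') => i r Er'.
have rc : forall y, y \in u :: r -> y \in c by move=> y; rewrite -Er' mem_rot.
have wr : w \in r.
  have : w \in rot i c by rewrite mem_rot.
  by rewrite Er' inE eq_sym (negbTE nuw).
have ur : uniq (u :: r) by rewrite -Er' rot_uniq.
have cr : cycle e (u :: r) by rewrite -Er' rot_cycle.
have szr : 3 <= size (u :: r) by rewrite -Er' size_rot.
case: (splitPr wr) ur cr szr rc => r1 r2 ur cr szr rc.
move: (cr) => /=; rewrite rcons_cat cat_path /= => /andP [p1 /andP [ew pw]].
have pr1 : path e u (rcons r1 w) by rewrite rcons_path p1 ew.
have pr2 : path e u (rcons (rev r2) w).
  by have := sym_rev_path esym pw; rewrite last_rcons belast_rcons rev_cons.
have notps : forall y, y \in c -> y \notin pre ++ suf.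
  move=> y yc; rewrite mem_cat negb_or; apply/andP; split; apply/negP => yi.
  - by move/hasPn: hpre => /(_ y yi); rewrite yc.
  - by move/hasPn: hsuf => /(_ y yi); rewrite yc.
have E3 : forall m, pre ++ u :: m ++ w :: suf = pre ++ (u :: m ++ [:: w]) ++ suf.
  by move=> m; rewrite /= -catA.
have uP' : uniq (pre ++ (u :: mid ++ [:: w]) ++ suf) by rewrite -E3 -EP.
have ncr : forall y, y \in r1 ++ r2 -> y \notin T'.
  move=> y yi; apply: nc; apply: rc; move: yi; rewrite !inE !mem_cat inE => /orP [] ->;
  by rewrite ?orbT.
have U1 : uniq (u :: r1 ++ [:: w]).
  apply: subseq_uniq ur; rewrite /= eqxx -[w :: r2]cat1s catA; exact: prefix_subseq.
have U2 : uniq (u :: rev r2 ++ [:: w]).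
  have : subseq (u :: w :: r2) (u :: r1 ++ w :: r2) by rewrite /= eqxx; exact: suffix_subseq.
  move/subseq_uniq/(_ ur); rewrite /= => /andP [un U]; apply/andP; split.
    by move: un; rewrite !inE mem_cat mem_rev inE orbC.
  by rewrite cat_uniq rev_uniq /= mem_rev orbF andbT; case/andP: U => -> ->.
apply: (tr (pre ++ u :: r1 ++ w :: suf) (pre ++ u :: rev r2 ++ w :: suf)).
- apply: st_path_swap stP' pr1 _; rewrite E3; apply: uniq_swap uP' U1 _.
  by move=> y yi; apply: notps; apply: rc; move: yi; rewrite !inE !mem_cat !inE => /orP [->|/orP [->|->]]; rewrite ?orbT.
- apply: st_path_swap stP' pr2 _; rewrite E3; apply: uniq_swap uP' U2 _.
  by move=> y yi; apply: notps; apply: rc; move: yi; rewrite !inE !mem_cat !inE mem_rev => /orP [->|/orP [->|->]]; rewrite ?orbT.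
- move=> EQ.
  have key : forall y m, y \in c ->
      y \in pre ++ u :: m ++ w :: suf = [|| y == u, y \in m | y == w].
    move=> y m yc; rewrite !mem_cat !inE.
    have := notps y yc; rewrite mem_cat negb_or => /andP [/negbTE hp /negbTE hs].
    by rewrite hp /= mem_cat inE hs orbF.
  have : 0 < size (r1 ++ r2) by move: szr; rewrite /= !size_cat /= addnS.
  case E: (r1 ++ r2) => [|y rr] // _.
  have yr : y \in r1 ++ r2 by rewrite E mem_head.
  have yc : y \in c by apply: rc; move: yr; rewrite !inE !mem_cat inE => /orP [] ->; rewrite ?orbT.
  move: ur => /= /andP [hu]; rewrite cat_uniq => /and3P [_ hh /andP [wr2 _]].
  move: yr; rewrite mem_cat => /orP [] yi.
  + have : y \in pre ++ u :: r1 ++ w :: suf by rewrite key // yi orbT.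
    rewrite EQ key // mem_rev.
    have -> : (y == u) = false by apply/negbTE; apply: contraNneq hu => <-; rewrite mem_cat yi.
    have -> : (y == w) = false.
      by apply/negbTE; apply: contraNneq hh => <-; apply/hasP; exists y; rewrite ?inE ?eqxx.
    have -> : (y \in r2) = false.
      by apply/negbTE/negP => yr2; move/negP: hh; apply; apply/hasP; exists y; rewrite ?inE ?yr2 ?orbT.
    by [].
  + have : y \in pre ++ u :: rev r2 ++ w :: suf by rewrite key // mem_rev yi orbT.
    rewrite -EQ key //.
    have -> : (y == u) = false by apply/negbTE; apply: contraNneq hu => <-; rewrite mem_cat inE yi !orbT.
    have -> : (y == w) = false.
      by apply/negbTE; apply: contraNneq wr2 => <-.
    have -> : (y \in r1) = false.
      by apply/negbTE/negP => yr1; move/negP: hh; apply; apply/hasP; exists y; rewrite ?inE ?yi ?orbT.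
    by [].
- rewrite !filter_cat /= !filter_cat /= (filter_nil (s := r1)); last first.
    by apply/hasPn => y yi; apply: ncr; rewrite mem_cat yi.
  rewrite (filter_nil (s := rev r2)) //.
  by apply/hasPn => y; rewrite mem_rev => yi; apply: ncr; rewrite mem_cat yi orbT.
Qed.

From mathcomp Require Import zify.

Lemma card_nbhdS (V : finType) (e : rel V) (S : {set V}) :
  #|nbhdS e S| <= #|S| * max_degree e.
Proof.
rewrite /nbhdS -sum_nat_const.
apply: (@leq_trans (\sum_(v in S) #|nbhd e v|)).
  elim/big_rec2: _ => [|v X n _ IH]; first by rewrite cards0.
  rewrite cardsU (leq_trans (leq_subr _ _)) // leq_add2l //.
by apply: leq_sum => v _; apply: leq_bigmax.
Qed.

Theorem mainTheorem7 (V : finType) (e : rel V) (s t : V) (S : {set V}) :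
  simple_graph e ->
  reduced e s t ->
  fvs e S ->
  (forall S' : {set V}, fvs e S' -> #|S| <= 2 * #|S'|) ->
  tracking_set e s t (S :|: nbhdS e S) /\
  (forall T' : {set V}, tracking_set e s t T' ->
     #|S :|: nbhdS e S| <= 2 * (max_degree e).+1 * #|T'|).
Proof.
move=> sg red hS hmin; split; first exact: part1.
move=> T' tr.
have h1 := hmin T' (tracking_fvs sg red tr).
have h2 := card_nbhdS e S.
have h3 : #|S :|: nbhdS e S| <= #|S| + #|nbhdS e S| by rewrite cardsU leq_subr.
nia.
Qed.
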